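(* Let $V$ be a non-empty measurable subset of $\mathbb R^N$ ($N\ge1$), and let $\beta,\zeta\in C^0(\mathbb R)$ be nondecreasing with $\beta(0)=\zeta(0)=0$. Let $(w_m)_{m\in\mathbb N}$ be measurable functions on $V$ and $\overline\beta,\overline\zeta\in L^2(V)$ such that $\beta(w_m)\to\overline\beta$ and $\zeta(w_m)\to\overline\zeta$ weakly in $L^2(V)$, and such that for some $\varphi\in L^\infty(V)$ with $\varphi>0$ a.e. on $V$, $$\lim_{m\to\infty}\int_V\varphi\,\beta(w_m)\,\zeta(w_m)\,dz=\int_V\varphi\,\overline\beta\,\overline\zeta\,dz.$$ Then for any measurable $w$ on $V$ with $(\beta+\zeta)(w)=\overline\beta+\overline\zeta$ a.e. on $V$, one has $\overline\beta=\beta(w)$ and $\overline\zeta=\zeta(w)$ a.e. on $V$. *)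

(* Defs.v *)
From HB Require Import structures.
From mathcomp Require Import all_boot all_order all_algebra.
From mathcomp Require Import all_classical all_reals all_analysis.
Set Implicit Arguments. Unset Strict Implicit. Unset Printing Implicit Defensive.
Import Order.TTheory GRing.Theory Num.Theory.
Import numFieldNormedType.Exports.
Local Open Scope classical_set_scope.
Local Open Scope ring_scope.

Definition L2 {d} {T : measurableType d} {R : realType}
  (mu : {measure set T -> \bar R}) (V : set T) (f : T -> R) : Prop :=
  measurable_fun V f /\ (\int[mu]_(x in V) ((f x) ^+ 2)%:E < +oo)%E.

Definition Linfty {d} {T : measurableType d} {R : realType}
  (mu : {measure set T -> \bar R}) (V : set T) (f : T -> R) : Prop :=
  measurable_fun V f /\ exists M : R, {ae mu, forall x, V x -> `|f x| <= M}.

Definition weak_L2_cvg {d} {T : measurableType d} {R : realType}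
  (mu : {measure set T -> \bar R}) (V : set T) (u : nat -> T -> R) (f : T -> R)
  : Prop :=
  (forall m, L2 mu V (u m)) /\ L2 mu V f /\
  forall g, L2 mu V g ->
    (fun m => Rintegral mu V (fun x => u m x * g x)) @ \oo -->
      Rintegral mu V (fun x => f x * g x).

(* Main.v *)
Require Import Defs.
From HB Require Import structures.
From mathcomp Require Import all_boot all_order all_algebra.
From mathcomp Require Import all_classical all_reals all_analysis.
From mathcomp Require Import measurable_realfun ring lra.
Import Order.TTheory GRing.Theory Num.Theory.
Import numFieldNormedType.Exports.
Local Open Scope classical_set_scope.
Local Open Scope ring_scope.

Module Helpers.
Set Implicit Arguments. Unset Strict Implicit.
Section helpers.
Context d (T : measurableType d) (R : realType) (mu : {measure set T -> \bar R}).
Variables (V : set T) (mV : measurable V).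

Lemma Rint_ae (f g : T -> R) : measurable_fun V f -> measurable_fun V g ->
  {ae mu, forall x, V x -> f x = g x} -> Rintegral mu V f = Rintegral mu V g.
Proof.
move=> mf mg h; congr fine; apply: ae_eq_integral => //.
- exact/measurable_EFinP.
- exact/measurable_EFinP.
by apply: filterS h => x hx Vx; rewrite hx.
Qed.

Lemma L2_meas f : L2 mu V f -> measurable_fun V f.
Proof. by case. Qed.

Lemma L2_sq_int f : L2 mu V f -> mu.-integrable V (EFin \o (fun x => f x ^+ 2)).
Proof.
move=> [mf fi]; apply/integrableP; split.
  by apply/measurable_EFinP; exact: measurable_funX.
rewrite (eq_integral (fun x => (f x ^+ 2)%:E)) // => x _.
by rewrite /= ger0_norm // sqr_ge0.
Qed.

Lemma L2_int f g : L2 mu V f -> L2 mu V g ->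
  mu.-integrable V (EFin \o (fun x => f x * g x)).
Proof.
move=> hf hg.
have hs : mu.-integrable V (EFin \o (fun x => f x ^+ 2 + g x ^+ 2)).
  have := integrableD mV (L2_sq_int hf) (L2_sq_int hg).
  by apply: eq_integrable.
apply: (le_integrable mV _ _ hs).
  by apply/measurable_EFinP; apply: measurable_funM; exact: L2_meas.
move=> x Vx /=; rewrite !lee_fin normrM (ger0_norm (addr_ge0 (sqr_ge0 _) (sqr_ge0 _))).
rewrite -(real_normK (num_real (f x))) -(real_normK (num_real (g x))).
have := normr_ge0 (f x); have := normr_ge0 (g x).
nra.
Qed.

Lemma int_bdd (p h : T -> R) (M : R) : mu.-integrable V (EFin \o h) ->
  measurable_fun V p -> (forall x, V x -> `|p x| <= M) ->
  mu.-integrable V (EFin \o (fun x => p x * h x)).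
Proof.
move=> hi mp pM.
have := integrableZl mV `|M| hi.
apply: le_integrable => //.
  apply/measurable_EFinP; apply: measurable_funM => //.
  by apply/measurable_EFinP; exact: measurable_int hi.
move=> x Vx /=; rewrite !lee_fin /= normrM normrM normr_id.
by rewrite ler_wpM2r // (le_trans (pM x Vx)) // ler_norm.
Qed.

Lemma L2_dom (f1 f2 g : T -> R) (c : R) : L2 mu V f1 -> L2 mu V f2 ->
  measurable_fun V g -> 0 <= c ->
  {ae mu, forall x, V x -> g x ^+ 2 <= c * (f1 x ^+ 2 + f2 x ^+ 2)} ->
  L2 mu V g.
Proof.
move=> [mf1 i1] [mf2 i2] mg c0 hae; split => //.
have h1 : measurable_fun V (fun x => (f1 x ^+ 2)%:E).
  by apply/measurable_EFinP; exact: measurable_funX.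
have h2 : measurable_fun V (fun x => (f2 x ^+ 2)%:E).
  by apply/measurable_EFinP; exact: measurable_funX.
have h12 := emeasurable_funD h1 h2.
have p1 : forall x, V x -> (0 <= (f1 x ^+ 2)%:E)%E by move=> x _; rewrite lee_fin sqr_ge0.
have p2 : forall x, V x -> (0 <= (f2 x ^+ 2)%:E)%E by move=> x _; rewrite lee_fin sqr_ge0.
have p12 : forall x, V x -> (0 <= (f1 x ^+ 2)%:E + (f2 x ^+ 2)%:E)%E.
  by move=> x Vx; apply: adde_ge0; [exact: p1|exact: p2].
apply: (@le_lt_trans _ _ (\int[mu]_(x in V) (c%:E * ((f1 x ^+ 2)%:E + (f2 x ^+ 2)%:E)))%E).
  apply: ae_ge0_le_integral => //.
  - by move=> x _; rewrite lee_fin sqr_ge0.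
  - by apply/measurable_EFinP; exact: measurable_funX.
  - by move=> x Vx; apply: mule_ge0; [rewrite lee_fin|exact: p12].
  - exact: measurable_funeM.
rewrite (ge0_integralZl mu mV h12 p12) ?lee_fin //.
rewrite (ge0_integralD mu mV p1 h1 p2 h2).
by rewrite lte_mul_pinfty // ?lee_fin // lte_add_pinfty.
Qed.

Lemma L2_bdd (p f : T -> R) (M : R) : L2 mu V f ->
  measurable_fun V p -> (forall x, V x -> `|p x| <= M) ->
  L2 mu V (fun x => p x * f x).
Proof.
move=> hf mp pM; apply: (L2_dom hf hf (c := M ^+ 2)).
- by apply: measurable_funM => //; exact: L2_meas.
- exact: sqr_ge0.
apply: aeW => x Vx; rewrite exprMn.
have h1 : p x ^+ 2 <= M ^+ 2.
  have := pM x Vx; have := normr_ge0 (p x).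
  rewrite -(real_normK (num_real (p x))); nra.
have := sqr_ge0 (f x); have := sqr_ge0 (p x); nra.
Qed.


Lemma L2sub (f g : T -> R) : L2 mu V f -> L2 mu V g -> L2 mu V (fun x => f x - g x).
Proof.
move=> hf hg; apply: (L2_dom hf hg (c := 2)) => //.
  by apply: measurable_funB; exact: L2_meas.
apply: aeW => x _; have := sqr_ge0 (f x + g x); nra.
Qed.

Lemma intB (f g : T -> R) : mu.-integrable V (EFin \o f) -> mu.-integrable V (EFin \o g) ->
  mu.-integrable V (EFin \o (fun x => f x - g x)).
Proof.
move=> hf hg; have := integrableB mV hf hg.
by apply: (eq_integrable mV) => x _ /=; rewrite EFinB.
Qed.

Lemma intD (f g : T -> R) : mu.-integrable V (EFin \o f) -> mu.-integrable V (EFin \o g) ->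
  mu.-integrable V (EFin \o (fun x => f x + g x)).
Proof.
move=> hf hg; have := integrableD mV hf hg.
by apply: (eq_integrable mV) => x _ /=; rewrite EFinD.
Qed.

Lemma split4 (psi f g u v : T -> R) (M : R) :
  L2 mu V f -> L2 mu V g -> L2 mu V u -> L2 mu V v ->
  measurable_fun V psi -> (forall x, V x -> `|psi x| <= M) ->
  Rintegral mu V (fun x => psi x * (f x - u x) * (g x - v x)) =
  Rintegral mu V (fun x => psi x * f x * g x)
  - Rintegral mu V (fun x => f x * (psi x * v x))
  - Rintegral mu V (fun x => g x * (psi x * u x))
  + Rintegral mu V (fun x => psi x * u x * v x).
Proof.
move=> hf hg hu hv mp pM.
have i1 := L2_int (L2_bdd hf mp pM) hg.
have i2 := L2_int hf (L2_bdd hv mp pM).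
have i3 := L2_int hg (L2_bdd hu mp pM).
have i4 := L2_int (L2_bdd hu mp pM) hv.
rewrite -RintegralB // -RintegralB //; last exact: intB.
rewrite -RintegralD //; last by apply: intB => //; exact: intB.
by apply: eq_Rintegral => x _; ring.
Qed.

Lemma Rint_eq0_ae (h : T -> R) : (forall x, V x -> 0 <= h x) ->
  mu.-integrable V (EFin \o h) -> Rintegral mu V h = 0 ->
  {ae mu, forall x, V x -> h x = 0}.
Proof.
move=> h0 hi hR.
have fin := integrable_fin_num mV hi.
have I0 : (\int[mu]_(x in V) (h x)%:E = 0)%E.
  by rewrite -(fineK fin); rewrite /Rintegral in hR; rewrite /= hR.
have mh : measurable_fun V (EFin \o h) by exact: measurable_int hi.
have := (ae_eq_integral_abs mu mV mh).1.
rewrite (eq_integral (fun x => (h x)%:E)); last first.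
  by move=> x /[!inE] Vx /=; rewrite ger0_norm // h0.
move=> /(_ I0); apply: filterS => x hx Vx.
by have := hx Vx => /= [[]].
Qed.

End helpers.

End Helpers.
Import Helpers.

Theorem lemma5p5 (d : measure_display) (T : measurableType d) (R : realType)
  (mu : {measure set T -> \bar R}) (V : set T)
  (beta zeta : R -> R) (w_ : nat -> T -> R) (betab zetab phi w : T -> R) :
  measurable V -> V !=set0 ->
  continuous beta -> continuous zeta ->
  {homo beta : x y / x <= y} -> {homo zeta : x y / x <= y} ->
  beta 0 = 0 -> zeta 0 = 0 ->
  (forall m, measurable_fun V (w_ m)) ->
  L2 mu V betab -> L2 mu V zetab ->
  weak_L2_cvg mu V (fun m x => beta (w_ m x)) betab ->
  weak_L2_cvg mu V (fun m x => zeta (w_ m x)) zetab ->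
  Linfty mu V phi -> {ae mu, forall x, V x -> 0 < phi x} ->
  (fun m => Rintegral mu V (fun z => phi z * beta (w_ m z) * zeta (w_ m z)))
    @ \oo --> Rintegral mu V (fun z => phi z * betab z * zetab z) ->
  measurable_fun V w ->
  {ae mu, forall x, V x -> beta (w x) + zeta (w x) = betab x + zetab x} ->
  {ae mu, forall x, V x -> betab x = beta (w x)} /\
  {ae mu, forall x, V x -> zetab x = zeta (w x)}.
Proof.
move=> mV _ cb cz hb hz b0 z0 mw_ L2b L2z [L2bm [_ wb]] [L2zm [_ wz]]
  [mphi [M hM]] phipos cvgP mw hsum.
have mono t s : 0 <= (beta t - beta s) * (zeta t - zeta s).
  have [ts|st] := leP t s.
    have := hb _ _ ts; have := hz _ _ ts; nra.
  have := hb _ _ (ltW st); have := hz _ _ (ltW st); nra.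
have prodpos t : 0 <= beta t * zeta t.
  by have := mono t 0; rewrite b0 z0 !subr0.
pose bw x := beta (w x); pose zw x := zeta (w x).
have mbw : measurable_fun V bw.
  exact: measurableT_comp (continuous_measurable_fun cb) mw.
have mzw : measurable_fun V zw.
  exact: measurableT_comp (continuous_measurable_fun cz) mw.
have L2bw : L2 mu V bw.
  apply: (L2_dom mV L2b L2z mbw (c := 2)) => //.
  apply: filterS hsum => x hx Vx; have := hx Vx; have := prodpos (w x).
  rewrite /bw => h1 h2; have := sqr_ge0 (zeta (w x)); have := sqr_ge0 (betab x - zetab x).
  have e : (beta (w x) + zeta (w x))^+2 = (betab x + zetab x)^+2 by rewrite h2.
  nra.
have L2zw : L2 mu V zw.
  apply: (L2_dom mV L2b L2z mzw (c := 2)) => //.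
  apply: filterS hsum => x hx Vx; have := hx Vx; have := prodpos (w x).
  rewrite /zw => h1 h2; have := sqr_ge0 (beta (w x)); have := sqr_ge0 (betab x - zetab x).
  have e : (beta (w x) + zeta (w x))^+2 = (betab x + zetab x)^+2 by rewrite h2.
  nra.
pose psi x := Num.min (Num.max (phi x) 0) `|M|.
have mpsi : measurable_fun V psi.
  by apply: measurable_minr => //; apply: measurable_maxr.
have psiM x : V x -> `|psi x| <= `|M|.
  move=> _; rewrite /psi ger0_norm; first by rewrite ge_min lexx orbT.
  by rewrite le_min le_max lexx orbT normr_ge0.
have psi0 x : 0 <= psi x.
  by rewrite /psi le_min le_max lexx orbT normr_ge0.
have psiphi : {ae mu, forall x, V x -> phi x = psi x}.
  apply: filterS2 hM phipos => x h1 h2 Vx.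
  have := h1 Vx; have := h2 Vx => p0 pM.
  rewrite /psi max_l ?ltW // min_l //.
  by rewrite (le_trans _ (ler_norm M)) // (le_trans _ pM) // ler_norm.
have psipos : {ae mu, forall x, V x -> 0 < psi x}.
  apply: filterS2 psiphi phipos => x h1 h2 Vx.
  by rewrite -(h1 Vx); exact: h2.
have cA : (fun m => Rintegral mu V (fun x => psi x * beta (w_ m x) * zeta (w_ m x)))
    @ \oo --> Rintegral mu V (fun x => psi x * betab x * zetab x).
  have e1 : (fun m => Rintegral mu V (fun x => psi x * beta (w_ m x) * zeta (w_ m x)))
      = (fun m => Rintegral mu V (fun x => phi x * beta (w_ m x) * zeta (w_ m x))).
    apply/funext => m; apply: (Rint_ae mV).
    - apply: measurable_funM; last exact: L2_meas (L2zm m).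
      by apply: measurable_funM => //; exact: L2_meas (L2bm m).
    - apply: measurable_funM; last exact: L2_meas (L2zm m).
      by apply: measurable_funM => //; exact: L2_meas (L2bm m).
    by apply: filterS psiphi => x hx Vx; rewrite hx.
  have e2 : Rintegral mu V (fun x => psi x * betab x * zetab x)
      = Rintegral mu V (fun x => phi x * betab x * zetab x).
    apply: (Rint_ae mV).
    - apply: measurable_funM; last exact: L2_meas L2z.
      by apply: measurable_funM => //; exact: L2_meas L2b.
    - apply: measurable_funM; last exact: L2_meas L2z.
      by apply: measurable_funM => //; exact: L2_meas L2b.
    by apply: filterS psiphi => x hx Vx; rewrite hx.
  by rewrite e1 e2.
have cB := wb _ (L2_bdd mV L2zw mpsi psiM).
have cC := wz _ (L2_bdd mV L2bw mpsi psiM).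
have cI : (fun m => Rintegral mu V (fun x => psi x * (beta (w_ m x) - bw x) * (zeta (w_ m x) - zw x)))
   @ \oo --> Rintegral mu V (fun x => psi x * betab x * zetab x)
  - Rintegral mu V (fun x => betab x * (psi x * zw x))
  - Rintegral mu V (fun x => zetab x * (psi x * bw x))
  + Rintegral mu V (fun x => psi x * bw x * zw x).
  have eI := fun m => split4 mV (L2bm m) (L2zm m) L2bw L2zw mpsi psiM.
  rewrite (funext eI).
  apply: cvgD; last exact: cvg_cst.
  by apply: cvgB; [apply: cvgB|].
have L0 : 0 <= Rintegral mu V (fun x => psi x * (betab x - bw x) * (zetab x - zw x)).
  rewrite (split4 mV L2b L2z L2bw L2zw mpsi psiM).
  apply: (cvgr_to_ge cI); apply: nearW => m; apply: Rintegral_ge0 => x Vx.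
  by rewrite -mulrA; apply: mulr_ge0 => //; exact: mono.
pose h x := betab x - bw x.
have L2h : L2 mu V h := L2sub mV L2b L2bw.
have L2k : L2 mu V (fun x => zetab x - zw x) := L2sub mV L2z L2zw.
have iQ := L2_int mV (L2_bdd mV L2h mpsi psiM) L2h.
have iL := L2_int mV (L2_bdd mV L2h mpsi psiM) L2k.
have sum0 : Rintegral mu V (fun x => psi x * h x * h x)
   + Rintegral mu V (fun x => psi x * h x * (zetab x - zw x)) = 0.
  rewrite -RintegralD //.
  transitivity (Rintegral mu V (fun _ => (0:R))); last by rewrite Rintegral_cst // mul0r.
  apply: (Rint_ae mV) => //.
  - by apply/measurable_EFinP; exact: measurable_int (intD mV iQ iL).
  apply: filterS hsum => x hx Vx; have := hx Vx => e.
  rewrite -mulrDr.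
  have -> : h x + (zetab x - zw x) = 0 by rewrite /h /bw /zw; lra.
  by rewrite mulr0.
have Q0' : 0 <= Rintegral mu V (fun x => psi x * h x * h x).
  by apply: Rintegral_ge0 => x _; rewrite -mulrA -expr2 mulr_ge0 // sqr_ge0.
have Q0 : Rintegral mu V (fun x => psi x * h x * h x) = 0.
  rewrite /h in sum0 Q0' *; lra.
have aeQ := Rint_eq0_ae mV (fun x _ => (ltac:(by rewrite -mulrA -expr2 mulr_ge0 // sqr_ge0) : 0 <= psi x * h x * h x)) iQ Q0.
have hb' : {ae mu, forall x, V x -> betab x = beta (w x)}.
  apply: filterS2 aeQ psipos => x h1 h2 Vx.
  have := h1 Vx; have := h2 Vx => p /eqP.
  rewrite -mulrA mulf_eq0 (gt_eqF p) /= mulf_eq0 orbb => /eqP.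
  rewrite /h /bw; lra.
split => //.
apply: filterS2 hb' hsum => x h1 h2 Vx.
have := h1 Vx; have := h2 Vx; lra.
Qed.
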